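(* Let $n,l\in\mathbb N$, $1<u\le2$ with $\frac1u+\frac1{u'}=1$, and $s>\frac{ln}u$. Let $B$ be a proper subset of $J_l=\{1,\dots,l\}$, with $\#B$ its number of elements. For $l_0\in J_l\setminus B$ define $$S_B^{l_0}(s)=\Big\{(x_1,\dots,x_l)\in R_B:\ \frac sn>\frac{\#B+1}{u}+\sum_{i\in J_l\setminus(B\cup\{l_0\})}x_i\Big\}.$$ Then the convex hull of $\bigcup_{l_0\in J_l\setminus B}S_B^{l_0}(s)$ equals $S_B(s)$.
   Context: $R_B=\{(x_1,\dots,x_l)\in(0,1)^l: 0<x_i\le\frac1u \text{ for } i\in B,\ \frac1u<x_i<1\text{ for } i\notin B\}$ and $S_B(s)=\{(x_1,\dots,x_l)\in R_B:\ \sum_{i\in J_l}x_i-\frac1{u'}<\frac sn+\sum_{i\in B}(x_i-\frac1u)\}$. *)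

(* Defs.v *)
From mathcomp Require Import all_boot all_order all_algebra.
From mathcomp Require Import reals.
Set Implicit Arguments. Unset Strict Implicit. Unset Printing Implicit Defensive.
Import Order.TTheory GRing.Theory Num.Theory.
Local Open Scope ring_scope.

(* Points of R^l are row vectors 'rV[R]_l; coordinate i (i : 'I_l, i.e. the
   index i+1 of J_l = {1,..,l}) of x is x ord0 i. *)

Definition conv_hull (R : realType) (l : nat) (A : 'rV[R]_l -> Prop) :
    'rV[R]_l -> Prop :=
  fun x => exists (k : nat) (w : 'I_k -> R) (p : 'I_k -> 'rV[R]_l),
    [/\ forall j, 0 <= w j, \sum_(j < k) w j = 1, forall j, A (p j)
      & x = \sum_(j < k) w j *: p j].

Definition R_B (R : realType) (l : nat) (u : R) (B : {set 'I_l})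
    (x : 'rV[R]_l) : Prop :=
  forall i : 'I_l, [/\ 0 < x ord0 i, x ord0 i < 1,
    i \in B -> x ord0 i <= u^-1 & i \notin B -> u^-1 < x ord0 i].

Definition S_B (R : realType) (n l : nat) (u u' s : R) (B : {set 'I_l})
    (x : 'rV[R]_l) : Prop :=
  R_B u B x /\
  \sum_(i < l) x ord0 i - u'^-1 < s / n%:R + \sum_(i in B) (x ord0 i - u^-1).

Definition S_B_l0 (R : realType) (n l : nat) (u s : R) (B : {set 'I_l})
    (l0 : 'I_l) (x : 'rV[R]_l) : Prop :=
  R_B u B x /\
  s / n%:R > (#|B|.+1)%:R / u + \sum_(i < l | (i \notin B) && (i != l0)) x ord0 i.

(* Main.v *)
Require Import Defs.
From mathcomp Require Import all_boot all_order all_algebra.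
From mathcomp Require Import reals ring lra.
From Stdlib Require Import Classical.
Import Order.TTheory GRing.Theory Num.Theory.
Local Open Scope ring_scope.
Section Conv.
Variable R : realType.

Lemma conv_pos k (w f : 'I_k -> R) :
  (forall j, 0 <= w j) -> \sum_(j < k) w j = 1 -> (forall j, 0 < f j) ->
  0 < \sum_(j < k) w j * f j.
Proof.
move=> w0 w1 f0.
case: (pickP (fun j => 0 < w j)) => [j hj|h].
  rewrite (bigD1 j) //=.
  have : 0 <= \sum_(i < k | i != j) w i * f i.
    by apply: sumr_ge0 => i _; apply: mulr_ge0 => //; apply: ltW.
  have : 0 < w j * f j by apply: mulr_gt0.
  lra.
exfalso.
have : \sum_(j < k) w j = 0.
  apply: big1 => j _; have := w0 j; rewrite le_eqVlt h orbF => /eqP <-//.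
by rewrite w1 => /eqP; rewrite oner_eq0.
Qed.

Lemma conv_nneg k (w f : 'I_k -> R) :
  (forall j, 0 <= w j) -> (forall j, 0 <= f j) ->
  0 <= \sum_(j < k) w j * f j.
Proof. by move=> w0 f0; apply: sumr_ge0 => j _; apply: mulr_ge0. Qed.

Lemma conv_shift k (w f : 'I_k -> R) L :
  \sum_(j < k) w j = 1 ->
  \sum_(j < k) w j * (f j - L) = \sum_(j < k) w j * f j - L.
Proof.
move=> w1.
rewrite (eq_bigr (fun j => w j * f j - w j * L)); last by move=> j _; rewrite mulrBr.
by rewrite sumrB -mulr_suml w1 mul1r.
Qed.

Lemma conv_lt k (w f : 'I_k -> R) L :
  (forall j, 0 <= w j) -> \sum_(j < k) w j = 1 -> (forall j, L < f j) ->
  L < \sum_(j < k) w j * f j.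
Proof.
move=> w0 w1 fL.
have := @conv_pos _ w (fun j => f j - L) w0 w1 (fun j => ltac:(have := fL j; lra)).
rewrite conv_shift //; lra.
Qed.

Lemma conv_gt k (w f : 'I_k -> R) L :
  (forall j, 0 <= w j) -> \sum_(j < k) w j = 1 -> (forall j, f j < L) ->
  \sum_(j < k) w j * f j < L.
Proof.
move=> w0 w1 fL.
have := @conv_pos _ w (fun j => - (f j - L)) w0 w1 (fun j => ltac:(have := fL j; lra)).
under eq_bigr do rewrite mulrN.
rewrite sumrN conv_shift //; lra.
Qed.

Lemma conv_le k (w f : 'I_k -> R) L :
  (forall j, 0 <= w j) -> \sum_(j < k) w j = 1 -> (forall j, f j <= L) ->
  \sum_(j < k) w j * f j <= L.
Proof.
move=> w0 w1 fL.
have := @conv_nneg _ w (fun j => - (f j - L)) w0 (fun j => ltac:(have := fL j; lra)).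
under eq_bigr do rewrite mulrN.
rewrite sumrN conv_shift //; lra.
Qed.

End Conv.
Lemma S_B_iff (R : realType) (n l : nat) (u u' s : R) (B : {set 'I_l}) x :
  u^-1 + u'^-1 = 1 ->
  S_B n u u' s B x <-> R_B u B x /\
   \sum_(i < l | i \notin B) x ord0 i < s / n%:R - (#|B|.+1)%:R / u + 1.
Proof.
move=> hu.
have e1 : \sum_(i < l) x ord0 i = \sum_(i < l | i \in B) x ord0 i + \sum_(i < l | i \notin B) x ord0 i.
  by rewrite (bigID (mem B)) /=.
have e2 : \sum_(i in B) (x ord0 i - u^-1) = \sum_(i in B) x ord0 i - #|B|%:R * u^-1.
  by rewrite sumrB sumr_const mulr_natl.
have e3 : (#|B|.+1)%:R / u = #|B|%:R * u^-1 + u^-1.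
  by rewrite -addn1 natrD mulrDl mul1r.
rewrite /S_B e1 e2 e3; split => [[h1 h2]|[h1 h2]]; split => //; lra.
Qed.

Lemma sum_wo (l : nat) (R : realType) (B : {set 'I_l}) (j : 'I_l) (f : 'I_l -> R) :
  j \notin B ->
  \sum_(i < l | (i \notin B) && (i != j)) f i = \sum_(i < l | i \notin B) f i - f j.
Proof. by move=> hj; rewrite [X in _ = X - _](bigD1 j) //= addrC addrK. Qed.

Lemma conv_coord (R : realType) l k (w : 'I_k -> R) (p : 'I_k -> 'rV[R]_l) i :
  (\sum_(j < k) w j *: p j) ord0 i = \sum_(j < k) w j * p j ord0 i.
Proof. by rewrite summxE; apply: eq_bigr => j _; rewrite mxE. Qed.

Lemma forward (R : realType) (n l : nat) (u u' s : R) (B : {set 'I_l}) x :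
  u^-1 + u'^-1 = 1 ->
  conv_hull (fun y => exists l0 : 'I_l, l0 \notin B /\ S_B_l0 n u s B l0 y) x ->
  S_B n u u' s B x.
Proof.
move=> hu [k [w [p [w0 w1 hp ->]]]].
apply/S_B_iff => //; split.
  move=> i; rewrite conv_coord; split.
  - by apply: conv_lt => // j; have [l0 [_ [/(_ i) [] ]]] := hp j.
  - by apply: conv_gt => // j; have [l0 [_ [/(_ i) [] ]]] := hp j.
  - move=> iB; apply: conv_le => // j; have [l0 [_ [/(_ i) [] ]]] := hp j.
    by move=> _ _ /(_ iB).
  - move=> iB; apply: conv_lt => // j; have [l0 [_ [/(_ i) [] ]]] := hp j.
    by move=> _ _ _ /(_ iB).
rewrite (eq_bigr (fun i => \sum_(j < k) w j * p j ord0 i)); last by move=> i _; rewrite conv_coord.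
rewrite exchange_big /=.
rewrite (eq_bigr (fun j => w j * \sum_(i < l | i \notin B) p j ord0 i)); last by move=> j _; rewrite mulr_sumr.
apply: conv_gt => // j.
have [l0 [hl0 [hR hS]]] := hp j.
move: hS; rewrite sum_wo //.
have := hR l0; case=> _ h _ _; lra.
Qed.
Lemma backward (R : realType) (n l : nat) (u u' s : R) (B : {set 'I_l}) x :
  (0 < n)%N ->
  1 < u -> u^-1 + u'^-1 = 1 ->
  s > (l * n)%:R / u ->
  B \proper [set: 'I_l] ->
  S_B n u u' s B x ->
  conv_hull (fun y => exists l0 : 'I_l, l0 \notin B /\ S_B_l0 n u s B l0 y) x.
Proof.
move=> n0 u1 hu hs hB HSB.
have [hR hS] := proj1 (@S_B_iff R n l u u' s B x hu) HSB.
case: (classic (exists l0, l0 \notin B /\ S_B_l0 n u s B l0 x)) => [hx|hx].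
  exists 1%N, (fun _ => 1), (fun _ => x); split => //.
  - by rewrite big_ord1.
  - by rewrite big_ord1 scale1r.
have a0 : 0 < u^-1 by rewrite invr_gt0; lra.
have e3 : (#|B|.+1)%:R / u = #|B|%:R * u^-1 + u^-1.
  by rewrite -addn1 natrD mulrDl mul1r.
rewrite e3 in hS.
pose m := #|~: B|.
have hmsum : forall c : R, \sum_(i < l | i \notin B) c = m%:R * c.
  move=> c; rewrite mulr_natl -sumr_const; apply: eq_bigl => i; by rewrite in_setC.
have hl : (#|B| + m)%N = l by rewrite cardsC card_ord.
have [e eE] : {e : R | e = s / n%:R - (#|B|%:R * u^-1 + u^-1) - (m%:R - 1) * u^-1} by eexists.
have e0 : 0 < e.
  have hn : 0 < n%:R :> R by rewrite ltr0n.
  have : l%:R * u^-1 < s / n%:R.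
    rewrite ltr_pdivlMr //; move: hs; rewrite natrM; congr (_ < _); rewrite mulrAC //.
  rewrite -hl natrD; lra.
pose d := fun i => x ord0 i - u^-1.
have hdE : forall i, d i = x ord0 i - u^-1 by [].
pose S := \sum_(i < l | i \notin B) d i.
have hSx : \sum_(i < l | i \notin B) x ord0 i = m%:R * u^-1 + S.
  rewrite /S /d sumrB hmsum; ring.
have hS' : S < e + 1 - u^-1 by lra.
have hnot : forall j, j \notin B -> e <= S - d j.
  move=> j hj.
  have : ~ (s / n%:R > (#|B|.+1)%:R / u + \sum_(i < l | (i \notin B) && (i != j)) x ord0 i).
    by move=> h; apply: hx; exists j; split => //; split.
  move/negP; rewrite -leNgt sum_wo // hSx e3 hdE; lra.
have [j0 j0B] : exists j0, j0 \notin B.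
  by move/properP: hB => [_ [j0 _ h]]; exists j0.
have hd : forall i, i \notin B -> 0 < d i /\ d i < 1 - u^-1.
  move=> i iB; have [h1 h2 _ h4] := hR i; have := h4 iB; rewrite hdE; lra.
have Spos : 0 < S.
  have := hnot j0 j0B; have := hd j0 j0B; lra.
have [r [r0 [r1 r2]]] : exists r, 0 < r /\ S - (1 - u^-1) < r /\ r < e.
  case: (lerP (S - (1 - u^-1)) 0) => h.
    exists (e / 2); lra.
  exists ((S - (1 - u^-1) + e) / 2); lra.
pose rho := fun j => r / (S - d j).
have hrho : forall j, j \notin B -> [/\ 0 < rho j, rho j < 1 & rho j * (S - d j) = r].
  move=> j hj; have := hnot j hj => hj'.
  have hp : 0 < S - d j by lra.
  split.
  - by rewrite /rho divr_gt0.
  - by rewrite /rho ltr_pdivrMr // mul1r; lra.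
  - by rewrite /rho divfK // gt_eqF.
pose g := fun j => if j \notin B then d j / (1 - rho j) else 0.
have g0 : forall j, 0 <= g j.
  move=> j; rewrite /g; case: ifP => // hj.
  have [h1 h2 _] := hrho j hj; have [h3 _] := hd j hj.
  by apply: ltW; apply: divr_gt0; lra.
pose K := \sum_(j < l) g j.
have Kpos : 0 < K.
  rewrite /K (bigD1 j0) //=.
  have : 0 < g j0.
    rewrite /g j0B; have [h1 h2 _] := hrho j0 j0B; have [h3 _] := hd j0 j0B.
    by apply: divr_gt0; lra.
  have : 0 <= \sum_(i < l | i != j0) g i by apply: sumr_ge0 => i _.
  lra.
pose w := fun j => g j / K.
have hw : forall j, w j * (1 - rho j) = if j \notin B then d j / K else 0.
  move=> j; rewrite /w /g; case: ifP => hj; last by rewrite !mul0r.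
  have [h1 h2 _] := hrho j hj.
  field; apply/andP; split; rewrite ?gt_eqF //; lra.
pose z := fun j => \row_(i < l) (if i \in B then x ord0 i
          else u^-1 + rho j * d i + (if i == j then S * (1 - rho j) else 0)).
have hz : forall j, j \notin B -> S_B_l0 n u s B j (z j).
  move=> j hj.
  have [h1 h2 h3] := hrho j hj; have hj' := hnot j hj.
  have hzj : z j ord0 j = u^-1 + S - r.
    rewrite /z mxE (negbTE hj) eqxx; lra.
  split.
    move=> i; rewrite /z mxE; case: ifP => iB; first by have := hR i; rewrite iB.
    have [hd1 hd2] := hd i (negbT iB).
    case: eqP => [->|ne].
      have [hd3 hd4] := hd j hj.
      split => //; lra.
    have : rho j * d i < d i by nra.
    have : 0 < rho j * d i by nra.
    split => //; lra.
  rewrite sum_wo // hzj e3.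
  have -> : \sum_(i < l | i \notin B) z j ord0 i = m%:R * u^-1 + S.
    rewrite (eq_bigr (fun i => u^-1 + rho j * d i + (if i == j then S * (1 - rho j) else 0))); last first.
      by move=> i /negbTE iB; rewrite /z mxE iB.
    rewrite !big_split /= hmsum -mulr_sumr -/S.
    rewrite (bigD1 j) //= eqxx big1 ?addr0; last first.
      by move=> i /andP[_ /negbTE ->].
    lra.
  lra.
pose p := fun j => if j \in B then z j0 else z j.
exists l, w, p; split.
- by move=> j; rewrite /w; apply: divr_ge0 => //; apply: ltW.
- by rewrite /w -mulr_suml divff // gt_eqF.
- move=> j; rewrite /p; case: ifP => jB.
    by exists j0; split => //; apply: hz.
  by exists j; split; [rewrite jB | apply: hz; rewrite jB].
apply/rowP => i.
rewrite conv_coord.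
rewrite (eq_bigr (fun j => w j * z j ord0 i)); last first.
  move=> j _; rewrite /p; case: ifP => jB //.
  by rewrite /w /g jB /= !mul0r.
case iB: (i \in B).
  rewrite (eq_bigr (fun j => w j * x ord0 i)); last by move=> j _; rewrite /z mxE iB.
  by rewrite -mulr_suml /w -mulr_suml divff ?mul1r // gt_eqF.
rewrite (eq_bigr (fun j => w j * u^-1 + w j * d i - (if j \notin B then d j / K else 0) * d i
   + (if i == j then w j * (S * (1 - rho j)) else 0))); last first.
  move=> j _; rewrite /z mxE iB -hw; case: eqP => _; ring.
rewrite big_split sumrB big_split /= -!mulr_suml.
have hw1 : \sum_(j < l) w j = 1 by rewrite /w -mulr_suml divff // gt_eqF.
have hgK : (\sum_(j < l) g j) / K = 1 by rewrite divff // gt_eqF.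
rewrite hgK -big_mkcond -mulr_suml -/S.
rewrite (bigD1 i) //= eqxx big1 ?addr0; last first.
  by move=> j /negbTE; rewrite eq_sym => ->.
have -> : w i * (S * (1 - rho i)) = S * (d i / K).
  by rewrite mulrCA hw iB.
rewrite hdE; field; rewrite !gt_eqF //; lra.
Qed.

Theorem proposition5p3 (R : realType) (n l : nat) (u u' s : R)
    (B : {set 'I_l}) :
  (0 < n)%N ->
  1 < u -> u <= 2 -> u^-1 + u'^-1 = 1 ->
  s > (l * n)%:R / u ->
  B \proper [set: 'I_l] ->
  forall x : 'rV[R]_l,
    conv_hull (fun y => exists l0 : 'I_l, l0 \notin B /\ S_B_l0 n u s B l0 y) x
    <-> S_B n u u' s B x.
Proof.
move=> n0 u1 u2 hu hs hB x; split.
  exact: forward.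
exact: backward.
Qed.
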